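(* There exists a change of section $g$ such that $\sum_{j=1}^p {}^gm_{i,j}=m$ for every $i\in\{1,\dots,p\}$ (such $g$ are called appropriate). Moreover the appropriate $g$-changed process is unique: if $g_1,g_2$ are appropriate changes of section then ${}^{g_1}\mu_{i,j}={}^{g_2}\mu_{i,j}$ for all $i,j$.
   Context: Fix integers $d,p\ge 1$. Let $(Z_n)=(A_n,M_n)$ be a Markov-additive process on $\mathbb{Z}^d\times\{1,\dots,p\}$ (a Markov chain with $\mathbb{P}_{(x,i)}((A_1,M_1)=(x',i'))=\mathbb{P}_{(0,i)}((A_1,M_1)=(x'-x,i'))$), with jump matrix $\mu_{i,j}(x)=\mathbb{P}_{(0,i)}((A_1,M_1)=(x,j))$, assumed irreducible, aperiodic (for every state, the gcd of possible return times is $1$), with finite exponential moments ($\sum_xe^{\alpha\|x\|}\mu_{i,j}(x)<\infty$ for all $\alpha>0$). The matrix $\big(\sum_x\mu_{i,j}(x)\big)_{i,j}$ is the transition matrix of $(M_n)$, with unique stationary distribution $\pi$. Local drifts $m_{i,j}=\sum_x x\mu_{i,j}(x)$, global drift $m=\sum_{i,j}\pi_im_{i,j}$. A change of section is a real $p\times d$ matrix $g$ with rows $g_1,\dots,g_p$; the $g$-changed process has jump measures ${}^g\mu_{i,j}(x)=\mu_{i,j}(x+g_j-g_i)$, $x\in\mathbb{R}^d$, and local drifts ${}^gm_{i,j}=\sum_{x\in\mathbb{R}^d}x\,{}^g\mu_{i,j}(x)$. *)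

(* Defs.v *)
From HB Require Import structures.
From mathcomp Require Import all_boot all_order all_algebra.
From mathcomp Require Import all_classical all_reals.
From mathcomp Require Import ereal topology normedtype sequences esum exp.
Set Implicit Arguments. Unset Strict Implicit. Unset Printing Implicit Defensive.
Import Order.TTheory GRing.Theory Num.Theory.
Local Open Scope ring_scope.
Local Open Scope classical_set_scope.

Section MAP.
Variables (R : realType) (d p : nat).

(* The jump matrix: mu i j x = P_(0,i)((A_1,M_1) = (x,j)), x in Z^d. *)
Definition jumps := 'I_p -> 'I_p -> 'rV[int]_d -> R.

(* Sum over a (possibly uncountable) index set of a real family, defined as
   (sum of positive parts) - (sum of negative parts), each computed with the
   extended-real sum esum; this is the usual sum for absolutely summable
   families. *)
Definition rsum (T : choiceType) (f : T -> R) : R :=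
  fine (\esum_(x in [set: T]) (Num.max (f x) 0)%:E)%E
  - fine (\esum_(x in [set: T]) (Num.max (- f x) 0)%:E)%E.

Definition znorm (x : 'rV[int]_d) : R := \sum_(k < d) `|x ord0 k|%:~R.

Definition trans (mu : jumps) (x : 'rV[int]_d) (i : 'I_p)
  (y : 'rV[int]_d) (j : 'I_p) : R := mu i j (y - x).

Fixpoint reach (mu : jumps) (n : nat) (x : 'rV[int]_d) (i : 'I_p)
  (y : 'rV[int]_d) (j : 'I_p) : Prop :=
  match n with
  | 0 => x = y /\ i = j
  | n'.+1 => exists (z : 'rV[int]_d) (k : 'I_p),
      0 < trans mu x i z k /\ reach mu n' z k y j
  end.

Definition irreducible (mu : jumps) : Prop :=
  forall x i y j, exists n, reach mu n x i y j.

Definition aperiodic (mu : jumps) : Prop :=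
  forall x i (k : nat),
    (forall n, (0 < n)%N -> reach mu n x i x i -> (k %| n)%N) -> k = 1%N.

Definition exp_moments (mu : jumps) : Prop :=
  forall (alpha : R), 0 < alpha -> forall i j,
    (\esum_(x in [set: 'rV[int]_d]) (expR (alpha * znorm x) * mu i j x)%:E
       < +oo)%E.

Definition is_jump_matrix (mu : jumps) : Prop :=
  (forall i j x, 0 <= mu i j x) /\
  (forall i, \sum_(j < p) \esum_(x in [set: 'rV[int]_d]) (mu i j x)%:E = 1)%E.

Definition Pmat (mu : jumps) (i j : 'I_p) : R :=
  fine (\esum_(x in [set: 'rV[int]_d]) (mu i j x)%:E)%E.

Definition stationary (mu : jumps) (pi : 'I_p -> R) : Prop :=
  (forall i, 0 <= pi i) /\ \sum_(i < p) pi i = 1 /\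
  (forall j, \sum_(i < p) pi i * Pmat mu i j = pi j).

Definition zcast (x : 'rV[int]_d) : 'rV[R]_d := map_mx (fun z : int => z%:~R) x.

Definition ldrift (mu : jumps) (i j : 'I_p) : 'rV[R]_d :=
  \row_(k < d) rsum (fun x : 'rV[int]_d => (zcast x) ord0 k * mu i j x).

Definition gdrift (mu : jumps) (pi : 'I_p -> R) : 'rV[R]_d :=
  \sum_(i < p) \sum_(j < p) pi i *: ldrift mu i j.

Definition gmu (mu : jumps) (g : 'M[R]_(p, d)) (i j : 'I_p) (x : 'rV[R]_d) : R :=
  match pselect (exists y : 'rV[int]_d, zcast y = x + row j g - row i g) with
  | left e => mu i j (projT1 (cid e))
  | right _ => 0
  end.

Definition gdrift_loc (mu : jumps) (g : 'M[R]_(p, d)) (i j : 'I_p) : 'rV[R]_d :=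
  \row_(k < d) rsum (fun x : 'rV[R]_d => x ord0 k * gmu mu g i j x).

Definition appropriate (mu : jumps) (pi : 'I_p -> R) (g : 'M[R]_(p, d)) : Prop :=
  forall i, \sum_(j < p) gdrift_loc mu g i j = gdrift mu pi.

End MAP.

(* Main.v *)
Require Import Defs.
From HB Require Import structures.
From mathcomp Require Import all_boot all_order all_algebra.
From mathcomp Require Import all_classical all_reals.
From mathcomp Require Import ereal topology normedtype sequences esum exp.
From mathcomp Require Import lra ring zify.
Import Order.TTheory GRing.Theory Num.Theory.
Local Open Scope ring_scope.
Set Implicit Arguments. Unset Strict Implicit. Unset Printing Implicit Defensive.
Section PartA.
Variables (R : realType) (T : choiceType).
Local Open Scope classical_set_scope.

Lemma maxpos (x : R) : Num.max x 0 = (if 0 <= x then x else 0).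
Proof. by case: (@real_leP _ 0 x (num_real _) (num_real _)). Qed.

Lemma fin_real (x : \bar R) : (0 <= x)%E -> (x < +oo)%E -> x = (fine x)%:E.
Proof. by move=> h0 h1; rewrite fineK // ge0_fin_numE. Qed.

Lemma esumZ_ge0 (S : set T) (s : R) (a : T -> R) : 0 <= s -> (forall x, 0 <= a x) ->
  (\esum_(x in S) (s * a x)%:E = s%:E * \esum_(x in S) (a x)%:E)%E.
Proof.
move=> s0 a0; have [->|sp] := eqVneq s 0.
  by rewrite mul0e esum1 // => x _; rewrite mul0r.
have s0' : 0 < s by rewrite lt0r sp.
rewrite /esum -ereal_sup_pZl //; congr ereal_sup.
apply/seteqP; split => z /=.
- move=> [A hA <-]; exists (\sum_(x \in A) (a x)%:E)%E; first by exists A.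
  by rewrite ge0_mule_fsumr //; apply: eq_fsbigr => x _; rewrite EFinM.
- move=> [w [A hA <-] <-]; exists A => //.
  by rewrite ge0_mule_fsumr //; apply: eq_fsbigr => x _; rewrite EFinM.
Qed.
End PartA.
Section PartB.
Variables (R : realType) (T : choiceType).
Local Open Scope classical_set_scope.

Definition summ (f : T -> R) := (\esum_(x in [set: T]) (`|f x|)%:E < +oo)%E.

Lemma esum_lt (a b : T -> R) : (forall x, 0 <= a x) -> (forall x, a x <= b x) ->
  (\esum_(x in [set: T]) (b x)%:E < +oo)%E -> (\esum_(x in [set: T]) (a x)%:E < +oo)%E.
Proof.
move=> a0 ab; apply: le_lt_trans; apply: le_esum => x _; by rewrite lee_fin.
Qed.

Lemma rsum_dec (f a b : T -> R) : (forall x, 0 <= a x) -> (forall x, 0 <= b x) ->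
  (forall x, f x = a x - b x) ->
  (\esum_(x in [set: T]) (a x)%:E < +oo)%E -> (\esum_(x in [set: T]) (b x)%:E < +oo)%E ->
  rsum f = fine (\esum_(x in [set: T]) (a x)%:E) - fine (\esum_(x in [set: T]) (b x)%:E).
Proof.
move=> a0 b0 hf ha hb; rewrite /rsum.
set P := (\esum_(x in [set: T]) (Num.max (f x) 0)%:E)%E.
set N := (\esum_(x in [set: T]) (Num.max (- f x) 0)%:E)%E.
set A := (\esum_(x in [set: T]) (a x)%:E)%E.
set B := (\esum_(x in [set: T]) (b x)%:E)%E.
have eq : (P + B = N + A)%E.
  rewrite /P /N /A /B -(@esumD _ _ _ (fun x => (Num.max (f x) 0)%:E) (fun x => (b x)%:E)).
  rewrite -(@esumD _ _ _ (fun x => (Num.max (- f x) 0)%:E) (fun x => (a x)%:E)).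
  all: try (move=> x _; rewrite lee_fin ?maxpos; by [case: ifP | apply: a0 | apply: b0]).
    apply: eq_esum => x _; rewrite -!EFinD; congr EFin; rewrite !maxpos hf.
    have := a0 x; have := b0 x.
    case: ifPn => h1; case: ifPn => h2; rewrite -?ltNge in h1 h2 => *; lra.
  all: try (move=> x _; rewrite lee_fin ?maxpos; by [case: ifP | apply: a0 | apply: b0]).
have hP : (P < +oo)%E.
  apply: (@esum_lt _ a) => // x; rewrite ?maxpos; first by case: ifP.
  by rewrite hf; have := a0 x; have := b0 x; case: ifPn => h1; rewrite -?ltNge in h1 => *; lra.
have hN : (N < +oo)%E.
  apply: (@esum_lt _ b) => // x; rewrite ?maxpos; first by case: ifP.
  by rewrite hf; have := a0 x; have := b0 x; case: ifPn => h1; rewrite -?ltNge in h1 => *; lra.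
have gP : (0 <= P)%E by apply: esum_ge0 => x _; rewrite lee_fin maxpos; case: ifP.
have gN : (0 <= N)%E by apply: esum_ge0 => x _; rewrite lee_fin maxpos; case: ifP.
have gA : (0 <= A)%E by apply: esum_ge0 => x _; rewrite lee_fin.
have gB : (0 <= B)%E by apply: esum_ge0 => x _; rewrite lee_fin.
move: eq; rewrite (fin_real gP hP) (fin_real gN hN) (fin_real gA ha) (fin_real gB hb).
rewrite -!EFinD => -[]; lra.
Qed.
End PartB.
Section PartC.
Variables (R : realType) (T : choiceType).
Local Open Scope classical_set_scope.

Lemma pn (x : R) : [/\ 0 <= Num.max x 0, 0 <= Num.max (- x) 0,
   Num.max x 0 - Num.max (- x) 0 = x & Num.max x 0 + Num.max (- x) 0 = `|x| ].
Proof.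
rewrite !maxpos oppr_ge0; have [h|h] := leP 0 x.
- rewrite ger0_norm //; case: ifPn => h2; rewrite -?ltNge in h2; split => //; lra.
- rewrite ltr0_norm // (ltW h); split => //; lra.
Qed.

Lemma pos_le (x : R) : Num.max x 0 <= `|x|.
Proof. have [a b c e] := pn x; lra. Qed.
Lemma neg_le (x : R) : Num.max (- x) 0 <= `|x|.
Proof. have [a b c e] := pn x; lra. Qed.

Lemma pos_fin (f : T -> R) : summ f ->
  (\esum_(x in [set: T]) (Num.max (f x) 0)%:E < +oo)%E.
Proof. by apply: esum_lt => x; [case: (pn (f x))|apply: pos_le]. Qed.
Lemma neg_fin (f : T -> R) : summ f ->
  (\esum_(x in [set: T]) (Num.max (- f x) 0)%:E < +oo)%E.
Proof. by apply: esum_lt => x; [case: (pn (f x))|apply: neg_le]. Qed.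

Lemma esum_ge0R (a : T -> R) : (forall x, 0 <= a x) -> (0 <= \esum_(x in [set: T]) (a x)%:E)%E.
Proof. by move=> a0; apply: esum_ge0 => x _; rewrite lee_fin. Qed.

Lemma esumDR (a b : T -> R) : (forall x, 0 <= a x) -> (forall x, 0 <= b x) ->
  (\esum_(x in [set: T]) (a x)%:E < +oo)%E -> (\esum_(x in [set: T]) (b x)%:E < +oo)%E ->
  fine (\esum_(x in [set: T]) (a x + b x)%:E) =
  fine (\esum_(x in [set: T]) (a x)%:E) + fine (\esum_(x in [set: T]) (b x)%:E).
Proof.
move=> a0 b0 ha hb.
rewrite (eq_esum (b := fun x => (a x)%:E + (b x)%:E)%E); last by move=> x _; rewrite EFinD.
rewrite esumD; try by move=> x _; rewrite lee_fin.
by rewrite (fin_real (esum_ge0R a0) ha) (fin_real (esum_ge0R b0) hb).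
Qed.

Lemma esumDR_lt (a b : T -> R) : (forall x, 0 <= a x) -> (forall x, 0 <= b x) ->
  (\esum_(x in [set: T]) (a x)%:E < +oo)%E -> (\esum_(x in [set: T]) (b x)%:E < +oo)%E ->
  (\esum_(x in [set: T]) (a x + b x)%:E < +oo)%E.
Proof.
move=> a0 b0 ha hb.
rewrite (eq_esum (b := fun x => (a x)%:E + (b x)%:E)%E); last by move=> x _; rewrite EFinD.
by rewrite esumD; try (by move=> x _; rewrite lee_fin); apply: lte_add_pinfty.
Qed.

Lemma esumZR (c : R) (a : T -> R) : 0 <= c -> (forall x, 0 <= a x) ->
  (\esum_(x in [set: T]) (a x)%:E < +oo)%E ->
  fine (\esum_(x in [set: T]) (c * a x)%:E) = c * fine (\esum_(x in [set: T]) (a x)%:E)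
  /\ (\esum_(x in [set: T]) (c * a x)%:E < +oo)%E.
Proof.
move=> c0 a0 ha; rewrite esumZ_ge0 // (fin_real (esum_ge0R a0) ha) -EFinM; split => //.
exact: ltry.
Qed.

Lemma summD (f g : T -> R) : summ f -> summ g -> summ (fun x => f x + g x).
Proof.
move=> hf hg; apply: (@esum_lt _ _ _ (fun x => `|f x| + `|g x|)).
- by move=> x.
- move=> x; exact: ler_normD.
- by apply: esumDR_lt.
Qed.

Lemma summZ (c : R) (f : T -> R) : summ f -> summ (fun x => c * f x).
Proof.
move=> hf; apply: (@esum_lt _ _ _ (fun x => `|c| * `|f x|)).
- by move=> x.
- by move=> x; rewrite normrM.
by case: (esumZR (c := `|c|) (a := fun x => `|f x|)).
Qed.

Lemma rsumE (f : T -> R) : rsum f = fine (\esum_(x in [set: T]) (Num.max (f x) 0)%:E)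
  - fine (\esum_(x in [set: T]) (Num.max (- f x) 0)%:E).
Proof. by []. Qed.

Lemma rsumD (f g : T -> R) : summ f -> summ g -> rsum (fun x => f x + g x) = rsum f + rsum g.
Proof.
move=> hf hg.
rewrite (@rsum_dec _ _ _ (fun x => Num.max (f x) 0 + Num.max (g x) 0)
   (fun x => Num.max (- f x) 0 + Num.max (- g x) 0)).
- rewrite !esumDR ?rsumE; try (by move=> x; case: (pn (f x))); try (by move=> x; case: (pn (g x)));
   try (by apply: pos_fin); try (by apply: neg_fin).
  lra.
- by move=> x; case: (pn (f x)) => ? _ _ _; case: (pn (g x)) => ? _ _ _; lra.
- by move=> x; case: (pn (f x)) => _ ? _ _; case: (pn (g x)) => _ ? _ _; lra.
- by move=> x; case: (pn (f x)) => _ _ e1 _; case: (pn (g x)) => _ _ e2 _; lra.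
- apply: esumDR_lt; try (by move=> x; case: (pn (f x))); try (by move=> x; case: (pn (g x)));
   by apply: pos_fin.
- apply: esumDR_lt; try (by move=> x; case: (pn (f x))); try (by move=> x; case: (pn (g x)));
   by apply: neg_fin.
Qed.

Lemma rsumZ (c : R) (f : T -> R) : summ f -> rsum (fun x => c * f x) = c * rsum f.
Proof.
move=> hf; have [c0|c0] := leP 0 c.
- rewrite (@rsum_dec _ _ _ (fun x => c * Num.max (f x) 0) (fun x => c * Num.max (- f x) 0)).
  + case: (esumZR c0 (a := fun x => Num.max (f x) 0)) => //; first by move=> x; case: (pn (f x)).
      exact: pos_fin.
    move=> -> _; case: (esumZR c0 (a := fun x => Num.max (- f x) 0)) => //; first by move=> x; case: (pn (f x)).
      exact: neg_fin.
    by move=> -> _; rewrite rsumE mulrBr.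
  + by move=> x; case: (pn (f x)) => ? _ _ _; apply: mulr_ge0.
  + by move=> x; case: (pn (f x)) => _ ? _ _; apply: mulr_ge0.
  + by move=> x /=; case: (pn (f x)) => _ _ e _; rewrite -mulrBr e.
  + case: (esumZR c0 (a := fun x => Num.max (f x) 0)) => //; first by move=> x; case: (pn (f x)).
    exact: pos_fin.
  + case: (esumZR c0 (a := fun x => Num.max (- f x) 0)) => //; first by move=> x; case: (pn (f x)).
    exact: neg_fin.
- have c0' : 0 <= - c by lra.
  rewrite (@rsum_dec _ _ _ (fun x => - c * Num.max (- f x) 0) (fun x => - c * Num.max (f x) 0)).
  + case: (esumZR c0' (a := fun x => Num.max (f x) 0)) => //; first by move=> x; case: (pn (f x)).
      exact: pos_fin.
    move=> -> _; case: (esumZR c0' (a := fun x => Num.max (- f x) 0)) => //; first by move=> x; case: (pn (f x)).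
      exact: neg_fin.
    by move=> -> _; rewrite rsumE; lra.
  + by move=> x; case: (pn (f x)) => _ ? _ _; apply: mulr_ge0.
  + by move=> x; case: (pn (f x)) => ? _ _ _; apply: mulr_ge0.
  + by move=> x /=; case: (pn (f x)) => _ _ e _; rewrite mulNr mulNr opprK addrC -mulrBr e.
  + case: (esumZR c0' (a := fun x => Num.max (- f x) 0)) => //; first by move=> x; case: (pn (f x)).
    exact: neg_fin.
  + case: (esumZR c0' (a := fun x => Num.max (f x) 0)) => //; first by move=> x; case: (pn (f x)).
    exact: pos_fin.
Qed.
End PartC.
Section PartD.
Variables (R : realType) (T U : choiceType).
Local Open Scope classical_set_scope.

Lemma esum_reidx (e : T -> U) (G : U -> \bar R) : injective e ->
  (forall u, (forall t, e t <> u) -> G u = 0%E) ->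
  \esum_(u in [set: U]) G u = \esum_(t in [set: T]) G (e t).
Proof.
move=> ei h0; rewrite -(esum_image setT e G); last by move=> x y _ _; apply: ei.
rewrite [RHS]esum_mkcond; apply: eq_esum => u _.
case: (pselect (exists t, e t = u)) => [[t <-]|h].
  by rewrite ifT //; apply/mem_set; exists t.
rewrite ifF; first by rewrite h0 // => t ht; apply: h; exists t.
apply/negbTE/negP => /set_mem [t _ ht]; apply: h; by exists t.
Qed.

Lemma rsum_reindex (e : T -> U) (F : U -> R) : injective e ->
  (forall u, (forall t, e t <> u) -> F u = 0) -> rsum F = rsum (fun t => F (e t)).
Proof.
move=> ei h0; rewrite /rsum (@esum_reidx e (fun u => (Num.max (F u) 0)%:E)) //.
  rewrite (@esum_reidx e (fun u => (Num.max (- F u) 0)%:E)) //.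
  by move=> u /h0 ->; rewrite oppr0 maxxx.
by move=> u /h0 ->; rewrite maxxx.
Qed.
End PartD.
Section PartE.
Variables (R : realType) (d p : nat) (mu : jumps R d p).
Local Open Scope classical_set_scope.

Lemma esum_mu_le1 (H : is_jump_matrix mu) i j :
  (\esum_(x in [set: 'rV[int]_d]) (mu i j x)%:E <= 1)%E.
Proof.
case: H => h0 h1; rewrite -(h1 i) (bigD1 j) //=; apply: leeDl.
by apply: sume_ge0 => k _; apply: esum_ge0R.
Qed.

Lemma esum_mu_lt (H : is_jump_matrix mu) i j :
  (\esum_(x in [set: 'rV[int]_d]) (mu i j x)%:E < +oo)%E.
Proof. by apply: le_lt_trans (esum_mu_le1 H i j) _; apply: ltry. Qed.

Lemma Pmat_E (H : is_jump_matrix mu) i j :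
  \esum_(x in [set: 'rV[int]_d]) (mu i j x)%:E = (Pmat mu i j)%:E.
Proof. by rewrite /Pmat -fin_real //; [apply: esum_ge0R; case: H | apply: esum_mu_lt]. Qed.

Lemma Pmat_ge0 (H : is_jump_matrix mu) i j : 0 <= Pmat mu i j.
Proof. by rewrite -lee_fin -Pmat_E //; apply: esum_ge0R; case: H. Qed.

Lemma sum_Pmat (H : is_jump_matrix mu) i : \sum_(j < p) Pmat mu i j = 1.
Proof.
have := H.2 i; under eq_bigr do rewrite Pmat_E //.
by rewrite sumEFin => -[].
Qed.

Lemma Pmat_pos (H : is_jump_matrix mu) i j y : 0 < mu i j y -> 0 < Pmat mu i j.
Proof.
move=> hy; apply: lt_le_trans hy _; rewrite -lee_fin -Pmat_E //.
apply: esum_ge; exists [set y]; first by split => //; apply: finite_set1.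
rewrite fsbig_set1 //.
Qed.

Lemma summ_mu (H : is_jump_matrix mu) i j : summ (mu i j).
Proof.
rewrite /summ (eq_esum (b := fun x => (mu i j x)%:E)); first exact: esum_mu_lt.
by move=> x _; rewrite ger0_norm //; case: H.
Qed.

Lemma rsum_mu (H : is_jump_matrix mu) i j : rsum (mu i j) = Pmat mu i j.
Proof.
rewrite (@rsum_dec _ _ _ (mu i j) (fun=> 0)) //.
- by rewrite [X in _ - fine X]esum1 // fine0 subr0.
all: try (by rewrite esum1); try exact: esum_mu_lt; try (by case: H).
by move=> x /=; rewrite subr0.
Qed.

Lemma summ_drift (H : is_jump_matrix mu) (E : exp_moments mu) i j (k : 'I_d) :
  summ (fun y : 'rV[int]_d => zcast R y ord0 k * mu i j y).
Proof.
apply: (@esum_lt _ _ _ (fun y => expR (1 * znorm R y) * mu i j y)).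
- by move=> x.
- move=> y; rewrite normrM (@ger0_norm _ (mu i j y)); last by case: H.
  apply: ler_wpM2r; first by case: H.
  rewrite mul1r; apply: (le_trans _ (expR_ge1Dx _)); rewrite /zcast mxE -intr_norm.
  have hz : (`|y ord0 k|%:~R : R) <= znorm R y.
    rewrite /znorm (bigD1 k) //= lerDl; apply: sumr_ge0 => l _; by rewrite ler0z.
  lra.
- exact: E ltr01 i j.
Qed.
End PartE.
Section PartF.
Variables (R : realType) (d p : nat) (mu : jumps R d p).
Local Open Scope classical_set_scope.

Lemma eq_rsum (T : choiceType) (f g : T -> R) : f =1 g -> rsum f = rsum g.
Proof. by move=> h; congr rsum; apply: funext. Qed.

Lemma zcast_inj : injective (@zcast R d).
Proof.
move=> y1 y2 h; apply/rowP => l; have := congr1 (fun M : 'rV[R]_d => M ord0 l) h.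
by rewrite /zcast !mxE ord1 => /intr_inj.
Qed.

Lemma gmu_shift (g : 'M[R]_(p, d)) i j y :
  gmu mu g i j (zcast R y - (row j g - row i g)) = mu i j y.
Proof.
rewrite /gmu; case: pselect => [e|ne].
  case: cid => y' /= hy'; congr (mu i j); apply: zcast_inj.
  by rewrite hy' -addrA subrK.
by exfalso; apply: ne; exists y; rewrite -addrA subrK.
Qed.

Lemma gmu_out (g : 'M[R]_(p, d)) i j u :
  (forall y, zcast R y - (row j g - row i g) <> u) -> gmu mu g i j u = 0.
Proof.
move=> h; rewrite /gmu; case: pselect => [e|//].
case: cid => y' /= hy'; exfalso; apply: (h y').
by rewrite hy' -(addrA u) addrK.
Qed.

Lemma gdrift_locE (H : is_jump_matrix mu) (E : exp_moments mu) (g : 'M[R]_(p, d)) i j :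
  gdrift_loc mu g i j = ldrift mu i j - Pmat mu i j *: (row j g - row i g).
Proof.
apply/rowP => k; rewrite !mxE.
rewrite (@rsum_reindex _ _ _ (fun y => zcast R y - (row j g - row i g))); first last.
- by move=> u hu; rewrite gmu_out ?mulr0.
- by move=> y1 y2 /addIr /zcast_inj.
rewrite [LHS](eq_rsum (g := fun y => zcast R y ord0 k * mu i j y +
      (- (row j g - row i g) ord0 k) * mu i j y)); last first.
  by move=> y /=; rewrite gmu_shift !mxE; ring.
rewrite rsumD; last 2 first.
- exact: summ_drift.
- by apply: summZ; apply: summ_mu.
rewrite rsumZ; last exact: summ_mu.
rewrite rsum_mu // !mxE; ring.
Qed.
End PartF.
Section PartG.
Variables (R : realType) (d p : nat) (mu : jumps R d p).

Lemma appropriateE (H : is_jump_matrix mu) (E : exp_moments mu) pi (g : 'M[R]_(p, d)) :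
  appropriate mu pi g <-> forall i,
   \sum_(j < p) Pmat mu i j *: row j g - row i g = \sum_(j < p) ldrift mu i j - gdrift mu pi.
Proof.
have key i : \sum_(j < p) gdrift_loc mu g i j =
   \sum_(j < p) ldrift mu i j - (\sum_(j < p) Pmat mu i j *: row j g - row i g).
  under eq_bigr do rewrite gdrift_locE //.
  rewrite sumrB; congr (_ - _).
  rewrite (eq_bigr (fun j => Pmat mu i j *: row j g - Pmat mu i j *: row i g)); last first.
    by move=> j _; rewrite scalerBr.
  by rewrite sumrB -scaler_suml sum_Pmat // scale1r.
split => h i.
  by rewrite -(h i) key opprB addrCA subrr addr0.
by rewrite key h opprB addrCA subrr addr0.
Qed.

Lemma maxprin (H : is_jump_matrix mu) (I : irreducible mu) (u : 'I_p -> R) :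
  (forall i, \sum_(j < p) Pmat mu i j * u j = u i) -> forall i j, u i = u j.
Proof.
move=> hu i j.
pose i0 := [arg max_(k > i) u k]%O.
have hmax : forall k, u k <= u i0.
  by rewrite /i0; case: arg_maxP => // m _ hm k; apply: hm.
have step : forall a b, u a = u i0 -> 0 < Pmat mu a b -> u b = u i0.
  move=> a b ha hp.
  have hs : \sum_(k < p) Pmat mu a k * (u i0 - u k) = 0.
    rewrite (eq_bigr (fun k => Pmat mu a k * u i0 - Pmat mu a k * u k)); last first.
      by move=> k _; rewrite mulrBr.
    by rewrite sumrB -mulr_suml sum_Pmat // mul1r hu ha subrr.
  have hnn : forall k : 'I_p, true -> 0 <= Pmat mu a k * (u i0 - u k).
    move=> k _; apply: mulr_ge0; first exact: Pmat_ge0.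
    by rewrite subr_ge0.
  have := psumr_eq0P hnn hs (i := b) isT.
  move/eqP; rewrite mulf_eq0 => /orP[/eqP hp0|]; first by move: hp; rewrite hp0 ltxx.
  by rewrite subr_eq0 => /eqP ->.
have reach_max : forall n x a y b, reach mu n x a y b -> u a = u i0 -> u b = u i0.
  elim => [|n IH] x a y b /=; first by case=> _ <-.
  case=> z [k [hp hr]] ha; apply: (IH z k y b hr); apply: step ha _.
  exact: (Pmat_pos H hp).
have hall : forall k, u k = u i0.
  by move=> k; case: (I 0 i0 0 k) => n hn; apply: (reach_max n _ _ _ _ hn).
by rewrite !hall.
Qed.
End PartG.
Lemma gmu_eq (R : realType) (d p : nat) (mu : jumps R d p) (g1 g2 : 'M[R]_(p, d)) i j :
  row j g1 - row i g1 = row j g2 - row i g2 -> gmu mu g1 i j = gmu mu g2 i j.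
Proof. by move=> e; apply: funext => x; rewrite /gmu -!addrA e. Qed.

Unset Implicit Arguments.

Theorem proposition2p6 (R : realType) (d p : nat) (mu : jumps R d p)
  (pi : 'I_p -> R) :
  (1 <= d)%N -> (1 <= p)%N ->
  is_jump_matrix mu -> irreducible mu -> aperiodic mu -> exp_moments mu ->
  stationary mu pi ->
  (exists g : 'M[R]_(p, d), appropriate mu pi g) /\
  (forall g1 g2 : 'M[R]_(p, d), appropriate mu pi g1 -> appropriate mu pi g2 ->
     forall i j, gmu mu g1 i j = gmu mu g2 i j).
Proof.
move=> hd hp H I A E S.
have ker := maxprin H I.
have hs : forall (g : 'M[R]_(p, d)) b k,
    (\sum_(j < p) Pmat mu b j *: row j g - row b g) ord0 k =
    \sum_(j < p) Pmat mu b j * g j k - g b k.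
  move=> g b k; rewrite !mxE summxE; congr (_ - _); apply: eq_bigr => j _; by rewrite !mxE.
split; last first.
  move=> g1 g2 h1 h2 i j.
  have e1 := (appropriateE H E pi g1).1 h1; have e2 := (appropriateE H E pi g2).1 h2.
  have hc : forall k, forall a b, (g1 - g2) a k = (g1 - g2) b k.
    move=> k; apply: (ker (fun a => (g1 - g2) a k)) => a.
    have := hs g1 a k; rewrite e1 => h1'; have := hs g2 a k; rewrite e2 => h2'.
    rewrite (eq_bigr (fun b => Pmat mu a b * g1 b k - Pmat mu a b * g2 b k)); last first.
      by move=> b _; rewrite !mxE mulrBr.
    rewrite sumrB !mxE; lra.
  apply: gmu_eq; apply/rowP => k; rewrite !mxE.
  have := hc k j i; rewrite !mxE; lra.
pose V i := \sum_(j < p) ldrift mu i j - gdrift mu pi.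
pose PT : 'M[R]_p := \matrix_(j, i) Pmat mu i j.
pose Q := PT - 1%:M.
pose piC : 'M[R]_(p, 1) := \col_i pi i.
pose W : 'M[R]_(d, p) := \matrix_(k, i) V i ord0 k.
have hQpi : Q *m piC = 0.
  apply/matrixP => j z; rewrite mulmxBl mul1mx !mxE.
  rewrite (eq_bigr (fun i => pi i * Pmat mu i j)); last by move=> i _; rewrite /PT !mxE mulrC.
  by rewrite S.2.2 subrr.
have hQ_in : (Q <= kermx piC)%MS by apply/sub_kermxP.
have i1 : 'I_p := Ordinal hp.
have hker : (kermx Q <= (const_mx 1 : 'rV[R]_p))%MS.
  apply/row_subP => r.
  have hu : row r (kermx Q) *m Q = 0 by rewrite -row_mul mulmx_ker row0.
  move: (row r (kermx Q)) hu => u hu.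
  have hu2 : forall i, \sum_(j < p) Pmat mu i j * u ord0 j = u ord0 i.
    move=> i; move/matrixP: hu => /(_ ord0 i); rewrite mulmxBr mulmx1 !mxE.
    move/eqP; rewrite subr_eq0 => /eqP <-; apply: eq_bigr => j _; by rewrite /PT [X in _ = _ * X]mxE mulrC.
  have hc := ker _ hu2.
  rewrite (_ : u = u ord0 i1 *: const_mx 1); first by apply: scalemx_sub; apply: submx_refl.
  by apply/rowP => j; rewrite !mxE mulr1; apply: hc.
have rQ : (p - \rank Q <= 1)%N.
  rewrite -mxrank_ker; apply: leq_trans (mxrankS hker) _; exact: rank_leq_row.
have rpi : (1 <= \rank piC)%N.
  rewrite lt0n mxrank_eq0; apply/eqP => h0.
  have : \sum_(i < p) pi i = 0.
    by apply: big1 => i _; have := congr1 (fun M : 'M[R]_(p, 1) => M i ord0) h0; rewrite !mxE.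
  by rewrite S.2.1 => /eqP; rewrite oner_eq0.
have rk : (\rank (kermx piC) <= \rank Q)%N.
  rewrite mxrank_ker; have := rank_leq_row Q; lia.
have hsub : (kermx piC <= Q)%MS.
  by rewrite -(mxrank_leqif_sup hQ_in).2 eqn_leq rk (mxrankS hQ_in).
have hV0 : \sum_(i < p) pi i *: V i = 0.
  rewrite /V; under eq_bigr do rewrite scalerBr.
  rewrite sumrB -scaler_suml S.2.1 scale1r /gdrift.
  under eq_bigr do rewrite scaler_sumr.
  exact: subrr.
have hW : (W <= kermx piC)%MS.
  apply/sub_kermxP; apply/matrixP => k z; rewrite !mxE.
  rewrite (eq_bigr (fun i => (pi i *: V i) ord0 k)); last by move=> i _; rewrite !mxE mulrC.
  by rewrite -summxE hV0 mxE.
pose X := W *m pinvmx Q.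
have hX : X *m Q = W by apply: mulmxKpV; apply: submx_trans hW hsub.
exists X^T; apply/(appropriateE H E) => // i; apply/rowP => k.
rewrite hs; transitivity (W k i); last by rewrite mxE.
rewrite -hX mulmxBr mulmx1 !mxE; congr (_ - _); apply: eq_bigr => j _; by rewrite /PT !mxE mulrC.
Qed.
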